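(* Let $S \subseteq \mathbb{R}^n$ be nonempty, closed and convex, let $F = (F_1,\dots,F_m)^\top \colon S \to \mathbb{R}^m$ with each $F_i$ convex (and continuous), let $\ell > 0$, and define \[ u_\ell(x) := \max_{y \in S} \min_{i = 1,\dots,m} \left\{F_i(x) - F_i(y) - \frac{\ell}{2}\|x - y\|^2\right\}, \quad x \in S. \] Then $u_\ell(x) \ge 0$ for all $x \in S$. Moreover, $x \in S$ is weakly Pareto optimal for $\min_{x\in S} F(x)$ if and only if $u_\ell(x) = 0$.
   Context: $\|\cdot\|$ is the Euclidean norm. For $u,v\in\mathbb{R}^m$, $u<v$ means $u_i<v_i$ for all $i$. A point $x^\ast \in S$ is weakly Pareto optimal for $\min_{x\in S} F(x)$ if there is no $x \in S$ with $F(x) < F(x^\ast)$. *)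

(* Defs.v *)
From HB Require Import structures.
From mathcomp Require Import all_boot all_order all_algebra.
From mathcomp Require Import all_classical all_reals all_analysis.
Set Implicit Arguments. Unset Strict Implicit. Unset Printing Implicit Defensive.
Import Order.TTheory GRing.Theory Num.Theory.
Import numFieldNormedType.Exports.
Local Open Scope classical_set_scope.
Local Open Scope ring_scope.

Definition enorm (R : realType) (n : nat) (v : 'rV[R]_n) : R :=
  Num.sqrt (\sum_(j < n) v ord0 j ^+ 2).

Definition convex_set_rV (R : realType) (n : nat) (S : set 'rV[R]_n) : Prop :=
  forall x y (t : R), S x -> S y -> 0 <= t <= 1 -> S (t *: x + (1 - t) *: y).

Definition convex_fun_on (R : realType) (n : nat) (S : set 'rV[R]_n)
    (f : 'rV[R]_n -> R) : Prop :=
  forall x y (t : R), S x -> S y -> 0 <= t <= 1 ->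
    f (t *: x + (1 - t) *: y) <= t * f x + (1 - t) * f y.

Definition weakly_pareto (R : realType) (n m : nat) (S : set 'rV[R]_n)
    (F : 'I_m -> 'rV[R]_n -> R) (xs : 'rV[R]_n) : Prop :=
  S xs /\ ~ (exists x, S x /\ forall i : 'I_m, F i x < F i xs).

(* min_i { F_i(x) - F_i(y) - l/2 ||x - y||^2 }, as an extended real
   (a genuine min when m > 0). *)
Definition phi_l (R : realType) (n m : nat) (F : 'I_m -> 'rV[R]_n -> R)
    (l : R) (x y : 'rV[R]_n) : \bar R :=
  \big[mine/+oo%E]_(i < m) (F i x - F i y - l / 2 * enorm (x - y) ^+ 2)%:E.

(* u_l(x) = max_{y in S} phi_l(x, y), taken as the supremum over S in the
   extended reals (it is attained, but the value is the same). *)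
Definition u_l (R : realType) (n m : nat) (S : set 'rV[R]_n)
    (F : 'I_m -> 'rV[R]_n -> R) (l : R) (x : 'rV[R]_n) : \bar R :=
  ereal_sup [set phi_l F l x y | y in S].

(* Main.v *)
Require Import Defs.
From HB Require Import structures.
From mathcomp Require Import all_boot all_order all_algebra.
From mathcomp Require Import all_classical all_reals all_analysis.
From mathcomp Require Import ring lra.
Import Order.TTheory GRing.Theory Num.Theory.
Import numFieldNormedType.Exports.
Local Open Scope classical_set_scope.
Local Open Scope ring_scope.

Lemma enorm2 (R : realType) (n : nat) (v : 'rV[R]_n) :
  enorm v ^+ 2 = \sum_(j < n) v ord0 j ^+ 2.
Proof. by rewrite /enorm sqr_sqrtr // sumr_ge0 // => j _; exact: sqr_ge0. Qed.

Lemma enorm2_ge0 (R : realType) (n : nat) (v : 'rV[R]_n) : 0 <= enorm v ^+ 2.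
Proof. by rewrite enorm2 sumr_ge0 // => j _; exact: sqr_ge0. Qed.

Lemma enorm2Z (R : realType) (n : nat) (t : R) (v : 'rV[R]_n) :
  enorm (t *: v) ^+ 2 = t ^+ 2 * enorm v ^+ 2.
Proof.
rewrite !enorm2 mulr_sumr; apply: eq_bigr => j _; rewrite mxE; ring.
Qed.

Lemma enorm2_0 (R : realType) (n : nat) : enorm (0 : 'rV[R]_n) ^+ 2 = 0.
Proof. by rewrite -(scale0r (0 : 'rV[R]_n)) enorm2Z expr0n /= mul0r. Qed.

Lemma phi_gt (R : realType) (n m : nat) (F : 'I_m -> 'rV[R]_n -> R) l x y (c : R) :
  (forall i, c < F i x - F i y - l / 2 * enorm (x - y) ^+ 2) ->
  (c%:E < phi_l F l x y)%E.
Proof.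
move=> H; rewrite /phi_l; apply: (big_ind (fun v => (c%:E < v)%E)).
- exact: ltey.
- by move=> a b Ha Hb; rewrite lt_min Ha Hb.
- by move=> i _; rewrite lte_fin.
Qed.

Lemma phi_ge (R : realType) (n m : nat) (F : 'I_m -> 'rV[R]_n -> R) l x y (c : R) :
  (forall i, c <= F i x - F i y - l / 2 * enorm (x - y) ^+ 2) ->
  (c%:E <= phi_l F l x y)%E.
Proof.
move=> H; rewrite /phi_l; apply: (big_ind (fun v => (c%:E <= v)%E)).
- exact: leey.
- by move=> a b Ha Hb; rewrite le_min Ha Hb.
- by move=> i _; rewrite lee_fin.
Qed.

Lemma phi_le (R : realType) (n m : nat) (F : 'I_m -> 'rV[R]_n -> R) l x y i :
  (phi_l F l x y <= (F i x - F i y - l / 2 * enorm (x - y) ^+ 2)%:E)%E.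
Proof. by rewrite /phi_l (bigD1 i) //= ge_min lexx. Qed.

Theorem theorem3p3 (R : realType) (n m : nat) (S : set 'rV[R]_n)
    (F : 'I_m -> 'rV[R]_n -> R) (l : R) :
  (0 < m)%N ->
  S !=set0 -> closed S -> convex_set_rV S ->
  (forall i, convex_fun_on S (F i)) ->
  (forall i, {within S, continuous (F i)}) ->
  0 < l ->
  (forall x, S x -> (0 <= u_l S F l x)%E) /\
  (forall x, S x -> (weakly_pareto S F x <-> u_l S F l x = 0%E)).
Proof.
move=> m0 _ _ cS cF _ l0.
have P1 : forall x, S x -> (0 <= u_l S F l x)%E.
  move=> x Sx; apply: (@le_trans _ _ (phi_l F l x x)).
    apply: phi_ge => i; rewrite !subrr enorm2_0; lra.
  by apply: ereal_sup_ubound; exists x.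
split => // x Sx; split.
- move=> [_ WP]; apply: le_anti; rewrite P1 // andbT.
  apply: ge_ereal_sup => _ [y Sy <-].
  rewrite leNgt; apply/negP => Hp; apply: WP; exists y; split => // i.
  have := lt_le_trans Hp (@phi_le _ _ _ F l x y i); rewrite lte_fin.
  have := @enorm2_ge0 _ _ (x - y); nra.
- move=> Hu; split => //; move=> [z [Sz Hz]].
  pose d := \big[Num.min/1]_(i < m) (F i x - F i z).
  have d0 : 0 < d.
    apply: (big_ind (fun v => 0 < v)) => //.
      by move=> a b Ha Hb; rewrite lt_min Ha Hb.
    by move=> i _; rewrite subr_gt0.
  have d1 : d <= 1.
    rewrite /d; elim/big_rec: _ => // i v _ Hv.
    by rewrite ge_min Hv orbT.
  have dle : forall i, d <= F i x - F i z.
    by move=> i; rewrite /d (bigD1 i) //= ge_min lexx.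
  set D := enorm (x - z) ^+ 2.
  have D0 : 0 <= D := @enorm2_ge0 _ _ _.
  pose t := d / (l * D + 1).
  have lD1 : 0 < l * D + 1 by nra.
  have tdef : t * (l * D + 1) = d by rewrite /t divfK // gt_eqF.
  have t0 : 0 < t by rewrite /t divr_gt0.
  have t1 : t <= 1.
    have : 0 <= t * (l * D) by apply: mulr_ge0; [exact: ltW | exact: mulr_ge0 (ltW l0) D0].
    have := d1. nra.
  pose y := t *: z + (1 - t) *: x.
  have Sy : S y by apply: cS => //; rewrite (ltW t0) t1.
  have ey : x - y = t *: (x - z).
    by apply/rowP => j; rewrite !mxE; ring.
  have : (0%:E < u_l S F l x)%E.
    apply: (@lt_le_trans _ _ (phi_l F l x y)); last first.
      by apply: ereal_sup_ubound; exists y.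
    apply: phi_gt => i.
    rewrite ey enorm2Z -/D.
    have hc := cF i z x t Sz Sx; rewrite (ltW t0) t1 /= in hc.
    have hc' := hc isT.
    have h1 : t * d <= t * (F i x - F i z) by rewrite ler_wpM2l // ltW.
    have h2 : l / 2 * (t ^+ 2 * D) = t * (d - t) / 2.
      by rewrite -tdef; ring.
    rewrite h2.
    have h3 : t * (F i x - F i z) = t * F i x - t * F i z by ring.
    have h4 : t * (d - t) / 2 = t * d / 2 - t * t / 2 by ring.
    rewrite h4; rewrite h3 in h1.
    have h5 : 0 < t * t by rewrite mulr_gt0.
    have h6 : 0 < t * d by rewrite mulr_gt0.
    move: hc' h1 h5 h6.
    set a := t * F i z. set b := (1 - t) * F i x.
    have hb : b = F i x - t * F i x by rewrite /b; ring.
    rewrite hb. lra.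
  by rewrite Hu ltxx.
Qed.
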